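(* Let $N\ge1$ and $z\in\mathbb{C}^N$ with $z_j-z_k\notin i\pi\mathbb{Z}$ for $j\neq k$. Define the $N\times N$ matrix $Q$ by $$Q_{jk}=-\delta_{jk}\sum_{n\ne j}\coth(z_j-z_n)+(1-\delta_{jk})\frac{1}{\sinh(z_j-z_k)}.$$ Then $Q$ has spectrum $\{-N+1,-N+3,\ldots,N-3,N-1\}$ (i.e. its characteristic polynomial equals $\prod_{j=1}^N(\lambda-(2j-1-N))$). *)

(* Defs.v *)
From HB Require Import structures.
From mathcomp Require Import all_boot all_order all_algebra.
From mathcomp Require Import complex.
From mathcomp Require Import reals.
From mathcomp.analysis Require Import sequences exp trigo.
Set Implicit Arguments. Unset Strict Implicit. Unset Printing Implicit Defensive.
Import Order.TTheory GRing.Theory Num.Theory.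
Local Open Scope ring_scope.
Local Open Scope complex_scope.

Section ComplexHyperbolic.
Variable R : realType.

Definition cexp (z : R[i]) : R[i] :=
  (expR (@complex.Re R z) * cos (@complex.Im R z)) +i* (expR (@complex.Re R z) * sin (@complex.Im R z)).

Definition csinh (z : R[i]) : R[i] := (cexp z - cexp (- z)) / 2%:R.
Definition ccosh (z : R[i]) : R[i] := (cexp z + cexp (- z)) / 2%:R.
Definition ccoth (z : R[i]) : R[i] := ccosh z / csinh z.

Definition in_ipiZ (w : R[i]) : Prop :=
  exists m : int, w = 0 +i* (pi * m%:~R).

Definition Qmat (N : nat) (z : 'I_N -> R[i]) : 'M[R[i]]_N :=
  \matrix_(j < N, k < N)
    (if j == k then - \sum_(n < N | n != j) ccoth (z j - z n)
     else (csinh (z j - z k))^-1).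
End ComplexHyperbolic.

(* Main.v *)
Require Import Defs.
From HB Require Import structures.
From mathcomp Require Import all_boot all_order all_algebra.
From mathcomp Require Import complex.
From mathcomp Require Import reals.
From mathcomp.analysis Require Import sequences exp trigo.
From mathcomp Require Import ring lra.
Import Order.TTheory GRing.Theory Num.Theory.
Local Open Scope ring_scope.

Lemma sin_shift_nat (R : realType) (x : R) (n : nat) :
  `|sin (x + pi * n%:R)| = `|sin x|.
Proof.
elim: n => [|n IH]; first by rewrite mulr0 addr0.
have -> : x + pi * n.+1%:R = (x + pi * n%:R) + pi by rewrite -natr1; ring.
by rewrite sinDpi normrN IH.
Qed.

Lemma sin_shift_int (R : realType) (x : R) (m : int) :
  `|sin (x + pi * m%:~R)| = `|sin x|.
Proof.
case: m => n; first by rewrite sin_shift_nat.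
set t := x + _.
have -> : x = t + pi * (n.+1)%:R by rewrite /t NegzE mulrNz; ring.
by rewrite sin_shift_nat.
Qed.

Lemma sin_eq0_int (R : realType) (b : R) : sin b = 0 ->
  exists m : int, b = pi * m%:~R.
Proof.
move=> hb.
have pi0 : 0 < pi :> R by exact: pi_gt0.
exists (Num.floor (b / pi)).
set m := Num.floor _.
have [h1 h2] : (m%:~R <= b / pi) /\ (b / pi < (m + 1)%:~R).
  by have /andP[] := Num.Theory.floor_itv (b / pi).
rewrite intrD in h2.
have hbc : b = pi * (b / pi) by rewrite mulrC divfK // gt_eqF.
move: h1 h2; set c := b / pi => h1 h2.
have r0 : 0 <= b - pi * m%:~R.
  by rewrite hbc -mulrBr mulr_ge0 ?subr_ge0 // ltW.
have r1 : b - pi * m%:~R < pi.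
  rewrite hbc -mulrBr -[X in _ < X]mulr1 ltr_pM2l //.
  by rewrite ltrBlDl.
have hs : sin (b - pi * m%:~R) = 0.
  apply/normr0_eq0.
  by rewrite -(@sin_shift_int _ _ m) subrK hb normr0.
case: (ler0P (b - pi * m%:~R)) => hr.
  by apply/eqP; rewrite -subr_eq0; apply/eqP; apply: le_anti; rewrite hr r0.
have := sin_gt0_pi (x := b - pi * m%:~R); rewrite hr r1 hs ltxx.
by move=> /(_ isT).
Qed.

Section C.
Local Open Scope complex_scope.
Variable R : realType.
Implicit Types u v w : R[i].

Lemma cexpD u v : cexp (u + v) = cexp u * cexp v.
Proof.
case: u => a b; case: v => c d.
rewrite /cexp /= expRD cosD sinD /=.
apply/eqP; rewrite eq_complex /=; apply/andP; split; apply/eqP; ring.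
Qed.

Lemma cexp0 : cexp (0 : R[i]) = 1.
Proof. by rewrite /cexp /= expR0 cos0 sin0 mulr1 mulr0. Qed.

Lemma cexp_neq0 u : cexp u != 0.
Proof.
apply/negP => /eqP h.
have := cexpD u (- u); rewrite subrr cexp0 h mul0r => /eqP.
by rewrite oner_eq0.
Qed.

Lemma cexpN u : cexp (- u) = (cexp u)^-1.
Proof.
apply: (mulfI (cexp_neq0 u)); rewrite -cexpD subrr cexp0 mulfV //.
exact: cexp_neq0.
Qed.

Lemma aux_ipi (a b s : R) : s ^+ 2 = 1 -> expR a * cos b = s ->
  expR a * sin b = 0 -> in_ipiZ (a +i* b).
Proof.
move=> hs h1 h2.
have ea : expR a != 0 by rewrite gt_eqF // expR_gt0.
have sb : sin b = 0 by move/eqP: h2; rewrite mulf_eq0 (negbTE ea) => /eqP.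
have cb : cos b ^+ 2 = 1 by have := cos2Dsin2 b; rewrite sb expr0n /= addr0.
have e2 : expR a ^+ 2 = 1.
  by have := congr1 (fun t => t ^+ 2) h1; rewrite /= exprMn cb mulr1 hs.
have e1 : expR a = 1.
  have : (expR a - 1) * (expR a + 1) == 0.
    by rewrite mulrDr mulr1 mulrBl mul1r addrA subrK -expr2 e2 subrr.
  rewrite mulf_eq0 => /orP[]; first by rewrite subr_eq0 => /eqP.
  by rewrite gt_eqF // ltr_wpDl ?ltW ?expR_gt0.
have a0 : a = 0 by apply: expR_inj; rewrite e1 expR0.
have [m hm] := @sin_eq0_int _ _ sb.
by exists m; rewrite a0 hm.
Qed.

Lemma cexp_sq1 w : cexp w ^+ 2 = 1 -> in_ipiZ w.
Proof.
case: w => a b /eqP h.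
have : (cexp (a +i* b) - 1) * (cexp (a +i* b) + 1) == 0.
  by rewrite mulrDr mulr1 mulrBl mul1r addrA subrK -expr2 subr_eq0.
rewrite mulf_eq0 subr_eq0 addr_eq0 /cexp /= eq_complex /= => /orP[] /andP[/eqP h1 /eqP h2].
  by apply: (@aux_ipi a b 1 (expr1n _ _) h1 h2).
  apply: (@aux_ipi a b (-1) _ h1); last by move: h2; rewrite oppr0 andbT => /eqP/eqP.
  by rewrite sqrrN expr1n.
Qed.

Lemma cexp_sub u v : cexp (u - v) = cexp u / cexp v.
Proof. by rewrite cexpD cexpN. Qed.

Lemma csinh_eq u v : csinh (u - v) =
  (cexp u ^+ 2 - cexp v ^+ 2) / (2%:R * cexp u * cexp v).
Proof.
have hu := cexp_neq0 u; have hv := cexp_neq0 v.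
rewrite /csinh cexpN cexp_sub; field.
by rewrite hu hv.
Qed.

Lemma ccosh_eq u v : ccosh (u - v) =
  (cexp u ^+ 2 + cexp v ^+ 2) / (2%:R * cexp u * cexp v).
Proof.
have hu := cexp_neq0 u; have hv := cexp_neq0 v.
rewrite /ccosh cexpN cexp_sub; field.
by rewrite hu hv.
Qed.
End C.

Lemma similar_cp (F : fieldType) n (A B P : 'M[F]_n) :
  P \in unitmx -> A *m P = P *m B -> char_poly A = char_poly B.
Proof.
move=> uP hAB.
have e : char_poly_mx A *m map_mx polyC P = map_mx polyC P *m char_poly_mx B.
  rewrite /char_poly_mx mulmxBl mulmxBr -!map_mxM hAB.
  by rewrite -scalar_mxC.
have := congr1 determinant e; rewrite !det_mulmx det_map_mx /= => h.
apply: (mulIf (x := (\det P)%:P)).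
  by rewrite polyC_eq0 -unitfE -unitmxE.
by rewrite /char_poly h mulrC.
Qed.

Lemma cp_upper (F : fieldType) n (U : 'M[F]_n) :
  (forall i j : 'I_n, (j < i)%N -> U i j = 0) ->
  char_poly U = \prod_(i < n) ('X - (U i i)%:P).
Proof.
move=> hU; rewrite /char_poly -det_tr det_trig.
  by apply: eq_bigr => i _; rewrite !mxE eqxx.
apply/is_trig_mxP => i j lt_ij; rewrite !mxE.
have -> : (j == i) = false by apply/negbTE; rewrite -val_eqE /= gtn_eqF.
by rewrite mulr0n hU // subrr.
Qed.

Section Core.
Variables (F : fieldType) (N : nat) (y : 'I_N -> F).
Hypothesis hy : forall k, y k != 0.
Hypothesis hx : forall j k, j != k -> y j ^+ 2 != y k ^+ 2.
Let x j := y j ^+ 2.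

Definition Mm : 'M[F]_N := \matrix_(j < N, d < N) (y j * x j ^+ d).

Lemma Mm_unit : Mm \in unitmx.
Proof.
have -> : Mm = diag_mx (\row_j y j) *m (Vandermonde N (\row_j x j))^T.
  by apply/matrixP => i j; rewrite mul_diag_mx !mxE.
rewrite unitmx_mul unitmx_tr !unitmxE !unitfE det_diag det_Vandermonde.
apply/andP; split.
  by apply/prodf_neq0 => i _; rewrite mxE.
apply/prodf_neq0 => i _; apply/prodf_neq0 => k hik.
by rewrite !mxE subr_eq0 /x hx // -val_eqE /= gtn_eqF.
Qed.

Definition Qalg : 'M[F]_N := \matrix_(j < N, k < N)
  (if j == k then - \sum_(n < N | n != j) (x j + x n) / (x j - x n)
   else 2%:R * y j * y k / (x j - x k)).

Definition Pw (m : nat) := \sum_(k < N) x k ^+ m.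

Definition Um : 'M[F]_N := \matrix_(a < N, d < N)
  (if a == d then (2 * d.+1)%:R - 1 - N%:R
   else if (a < d)%N then - (2%:R * Pw (d - a)) else 0).

Lemma geomS (u v : F) (d : nat) :
  (u - v) * (\sum_(i < d) u ^+ i * v ^+ (d - i)) = v * (u ^+ d - v ^+ d).
Proof.
have := subrXX v u d.
have -> : \sum_(i < d) u ^+ i * v ^+ (d - i) =
          v * \sum_(i < d) v ^+ (d.-1 - i) * u ^+ i.
  rewrite mulr_sumr; apply: eq_bigr => i _.
  rewrite mulrA -exprS mulrC; congr (_ * _ ^+ _).
  by case: d i => [|d] [i hi] //=; rewrite subSn.
move=> h; rewrite mulrCA -opprB mulNr -h; ring.
Qed.

Lemma termL (j k : 'I_N) (d : nat) : k != j ->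
  2%:R * y j * y k / (x j - x k) * (y k * x k ^+ d)
  - (x j + x k) / (x j - x k) * (y j * x j ^+ d)
  = y j * (- x j ^+ d - 2%:R * \sum_(i < d) x j ^+ i * x k ^+ (d - i)).
Proof.
move=> hkj.
have hne : x j - x k != 0 by rewrite subr_eq0 /x hx // eq_sym.
have hS := geomS (x j) (x k) d.
have -> : \sum_(i < d) x j ^+ i * x k ^+ (d - i) =
   x k * (x j ^+ d - x k ^+ d) / (x j - x k).
  by rewrite -hS mulrC mulKf.
rewrite /x; field.
by move: hne; rewrite /x.
Qed.

Lemma sumS (j : 'I_N) (d : nat) (hd : (d <= N)%N) :
  \sum_(k < N | k != j) \sum_(i < d) x j ^+ i * x k ^+ (d - i)
  = \sum_(i < d) x j ^+ i * Pw (d - i) - d%:R * x j ^+ d.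
Proof.
rewrite exchange_big /=.
have -> : d%:R * x j ^+ d = \sum_(i < d) x j ^+ d.
  by rewrite sumr_const card_ord mulr_natl.
rewrite -sumrB; apply: eq_bigr => i _.
rewrite -mulr_sumr /Pw [in RHS](bigD1 j) //= mulrDr -exprD subnKC; last exact: ltnW.
by rewrite addrAC subrr add0r.
Qed.

Lemma sumL (j d : 'I_N) :
  \sum_k Qalg j k * Mm k d = y j * (- (N.-1)%:R * x j ^+ d
     - 2%:R * (\sum_(i < d) x j ^+ i * Pw (d - i) - d%:R * x j ^+ d)).
Proof.
rewrite (bigD1 j) //= !mxE eqxx.
have -> : \sum_(k < N | k != j) Qalg j k * Mm k d =
   \sum_(k < N | k != j) 2%:R * y j * y k / (x j - x k) * (y k * x k ^+ d).
  by apply: eq_bigr => k hk; rewrite !mxE eq_sym (negbTE hk).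
rewrite [in LHS]mulNr mulr_suml -sumrN -big_split /=.
rewrite -(sumS j d (ltnW (ltn_ord d))).
under eq_bigr => k hk do rewrite addrC termL //.
rewrite -[LHS]mulr_sumr; congr (_ * _).
rewrite big_split /=; congr (_ + _); last by rewrite sumrN mulr_sumr.
by rewrite sumr_const cardC1 card_ord mulNrn mulNr mulr_natl.
Qed.

Lemma sumR (j d : 'I_N) :
  \sum_a Mm j a * Um a d = y j * (((2 * d.+1)%:R - 1 - N%:R) * x j ^+ d
     - 2%:R * \sum_(i < d) x j ^+ i * Pw (d - i)).
Proof.
rewrite (bigD1 d) //= !mxE eqxx.
pose G := fun a : nat => y j * x j ^+ a * - (2%:R * Pw (d - a)).
have -> : \sum_(a < N | a != d) Mm j a * Um a d =
    \sum_(a < N | a != d) (if (a < d)%N then G a else 0).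
  apply: eq_bigr => a ha; rewrite !mxE (negbTE ha); case: ifP => _ //.
  by rewrite mulr0.
rewrite -big_mkcondr /=.
have -> : \sum_(a < N | (a != d) && (a < d)%N) G a = \sum_(a < N | (a < d)%N) G a.
  by apply: eq_bigl => a; apply/andb_idl => h; rewrite -val_eqE /= ltn_eqF.
rewrite -(big_ord_widen N G (ltnW (ltn_ord d))).
have -> : \sum_(i < d) G i = - (y j * (2%:R * \sum_(i < d) x j ^+ i * Pw (d - i))).
  rewrite mulr_sumr mulr_sumr -sumrN; apply: eq_bigr => i _; rewrite /G; ring.
ring.
Qed.

Lemma keyQM : Qalg *m Mm = Mm *m Um.
Proof.
apply/matrixP => j d; rewrite !mxE sumL sumR.
have hN : N = N.-1.+1 by rewrite prednK // (leq_ltn_trans _ (ltn_ord j)).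
set S := \sum_(i < d) _; set X := x j ^+ d.
rewrite natrM [(d.+1)%:R]mulrSr [in N%:R]hN [(N.-1.+1)%:R]mulrSr; ring.
Qed.

Lemma core_cp : char_poly Qalg =
  \prod_(j < N) ('X - (((2 * j.+1)%:R - 1 - N%:R : F))%:P).
Proof.
rewrite (@similar_cp _ _ _ _ _ Mm_unit keyQM) cp_upper.
  by apply: eq_bigr => i _; rewrite mxE eqxx.
move=> i k hki; rewrite mxE.
have -> : (i == k) = false by apply/negbTE; rewrite -val_eqE /= gtn_eqF.
by rewrite ltnNge ltnW.
Qed.
End Core.


Arguments Qalg {F N} y.

Theorem corollary4p4 (R : realType) (N : nat) (z : 'I_N -> R[i])
  (hN : (1 <= N)%N)
  (hz : forall j k : 'I_N, j != k -> ~ in_ipiZ (z j - z k)) :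
  char_poly (Qmat z) =
  \prod_(j < N) ('X - (((2 * j.+1)%:R - 1 - N%:R : R[i]))%:P).
Proof.
pose y k := cexp (z k).
have hy : forall k, y k != 0 by move=> k; exact: cexp_neq0.
have hx : forall j k, j != k -> y j ^+ 2 != y k ^+ 2.
  move=> j k hjk; apply/negP => /eqP e; apply: (hz j k hjk).
  apply: cexp_sq1; rewrite cexp_sub expr_div_n -/(y j) -/(y k) e divff //.
  by rewrite expf_neq0.

have -> : Qmat z = Qalg y.
  apply/matrixP => j k; rewrite !mxE; case: (eqVneq j k) => [e|hjk]; first subst k.
    congr (- _); apply: eq_bigr => n hn.
    have hne : y j ^+ 2 - y n ^+ 2 != 0 by rewrite subr_eq0 hx // eq_sym.
    rewrite /ccoth csinh_eq ccosh_eq -/(y j) -/(y n); field.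
    by rewrite hne (hy j) (hy n).
  have hne : y j ^+ 2 - y k ^+ 2 != 0 by rewrite subr_eq0 hx.
  rewrite csinh_eq -/(y j) -/(y k); field.
  by rewrite hne (hy j) (hy k).
exact: core_cp.
Qed.
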